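(* Let $f$ be a scale mixture of normals density with shape parameter $\delta\in\Delta$. Consider the accelerated failure time model $y_j=\log(T_j)={\bf x}_j^\top\bm\beta+\varepsilon_j$, $j=1,\dots,n$, for survival times $T_1,\dots,T_n$, where $\bm\beta\in\mathbb{R}^p$, ${\bf X}=({\bf x}_1^\top,\dots,{\bf x}_n^\top)^\top$ is a known $n\times p$ design matrix of full column rank, and $\varepsilon_j\stackrel{i.i.d.}{\sim}\mathrm{TP}(0,\sigma,\delta,\gamma;f)$, with prior $\pi(\bm\beta,\sigma,\delta,\gamma)\propto\pi(\gamma)\pi(\delta)/\sigma^{q}$, $q\ge0$, $\pi(\gamma),\pi(\delta)$ proper. Suppose that $n_c\le n$ of the survival times are censored and $n_o=n-n_c$ are observed, and let ${\bf y}_o$ denote the uncensored (log) observations and ${\bf X}_o$ the corresponding design submatrix. If the posterior distribution of $(\bm\beta,\sigma,\delta,\gamma)$ based only on the $n_o$ uncensored observations (i.e. on the model for ${\bf y}_o$ with design matrix ${\bf X}_o$ and the same prior) is proper, then the posterior distribution of $(\bm\beta,\sigma,\delta,\gamma)$ based on the full (censored and uncensored) sample is proper.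
   Context: A scale mixture of normals density is $f(z\mid\delta)=\int_{\mathbb{R}_+}\tau^{1/2}\phi(\tau^{1/2}z)\,dH(\tau\mid\delta)$ with $\phi$ the standard normal density and $H(\cdot\mid\delta)$ a mixing distribution on $\mathbb{R}_+$. The two-piece distribution $\mathrm{TP}(\mu,\sigma,\delta,\gamma;f)$ has density $g(z)=\frac{2}{\sigma[a(\gamma)+b(\gamma)]}\left[f\!\left(\frac{z-\mu}{\sigma b(\gamma)}\Big|\delta\right)I(z<\mu)+f\!\left(\frac{z-\mu}{\sigma a(\gamma)}\Big|\delta\right)I(z\ge\mu)\right]$, $z\in\mathbb{R}$, with $\mu\in\mathbb{R}$, $\sigma>0$, $\gamma\in\Gamma\subset\mathbb{R}$, and $a(\cdot),b(\cdot)$ given positive functions on $\Gamma$. In the likelihood, an uncensored observation contributes the density $g(y_j-{\bf x}_j^\top\bm\beta)$ (with $\mu=0$) and a censored observation contributes the probability, under this error distribution, that $y_j$ lies in its censoring set (e.g. $(\log T_j,\infty)$ for right censoring, or an interval for interval censoring). The posterior is proper if likelihood times prior has finite integral. *)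

(* Defs.v *)
From HB Require Import structures.
From mathcomp Require Import all_boot all_order all_algebra.
From mathcomp Require Import all_classical all_reals all_analysis.
From mathcomp Require Import measurable_realfun.
Set Implicit Arguments. Unset Strict Implicit. Unset Printing Implicit Defensive.
Import Order.TTheory GRing.Theory Num.Theory.
Import numFieldNormedType.Exports.
Local Open Scope classical_set_scope.
Local Open Scope ring_scope.

Section Defs.
Context {R : realType}.
Local Notation leb := (@lebesgue_measure R).

(* Scale mixture of normals density
   f(z | delta) = \int_{R_+} tau^{1/2} phi(tau^{1/2} z) dH(tau | delta),
   phi = standard normal density; H delta = mixing distribution.
   (Extended-real valued: the mixture may be +oo at some points.) *)
Definition smn_density (T : Type) (H : T -> probability R R) (delta : T) (z : R)
  : \bar R :=
  (\int[H delta]_(tau in `[0%R, +oo[)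
     (Num.sqrt tau * normal_pdf 0 1 (Num.sqrt tau * z))%:E)%E.

Definition tp_density (T : Type) (H : T -> probability R R) (a b : R -> R)
  (mu sigma : R) (delta : T) (gamma : R) (z : R) : \bar R :=
  ((2 / (sigma * (a gamma + b gamma)))%:E *
   (if (z < mu)%R then smn_density H delta ((z - mu) / (sigma * b gamma))
    else smn_density H delta ((z - mu) / (sigma * a gamma))))%E.

(* Lebesgue integral over R^p (row vectors), as an iterated integral
   over the coordinates. *)
Fixpoint int_Rn (p : nat) : ('rV[R]_p -> \bar R) -> \bar R :=
  match p with
  | 0 => fun F => F 0
  | p'.+1 => fun F =>
      (\int[leb]_(x in setT) int_Rn (fun v : 'rV[R]_p' =>
          F (row_mx (\row_(i < 1) x) v)))%E
  end.

Definition lin_pred (n p : nat) (X : 'M[R]_(n, p)) (j : 'I_n) (beta : 'rV[R]_p)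
  : R := \sum_(i < p) X j i * beta 0 i.

(* Unnormalised posterior mass: integral of likelihood times prior
   pi(beta,sigma,delta,gamma) \propto pi(gamma) pi(delta) / sigma^q,
   with Lebesgue measure on beta in R^p and sigma in (0,oo), and the proper
   priors on gamma and delta given as probability measures. *)
Definition post_mass (d : measure_display) (D : measurableType d) (p : nat)
  (Pgamma : probability R R) (Gamma : set R) (Pdelta : probability D R)
  (q : R) (lik : 'rV[R]_p -> R -> D -> R -> \bar R) : \bar R :=
  (\int[Pgamma]_(gamma in Gamma) \int[Pdelta]_(delta in setT)
     \int[leb]_(sigma in `]0%R, +oo[)
        ((sigma `^ (- q))%:E * int_Rn (fun beta => lik beta sigma delta gamma)))%E.

(* Likelihood of the AFT model: uncensored j contributes g(y_j - x_j^T beta),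
   censored j contributes P(y_j in C_j) = \int_{C_j} g(y - x_j^T beta) dy. *)
Definition lik_full (T : Type) (H : T -> probability R R) (a b : R -> R)
  (n p : nat) (X : 'M[R]_(n, p)) (y : 'I_n -> R) (cens : 'I_n -> bool)
  (C : 'I_n -> set R) (beta : 'rV[R]_p) (sigma : R) (delta : T) (gamma : R)
  : \bar R :=
  (\prod_(j < n)
     (if cens j then
        \int[leb]_(t in C j) tp_density H a b 0 sigma delta gamma (t - lin_pred X j beta)
      else tp_density H a b 0 sigma delta gamma (y j - lin_pred X j beta)))%E.

Definition lik_obs (T : Type) (H : T -> probability R R) (a b : R -> R)
  (n p : nat) (X : 'M[R]_(n, p)) (y : 'I_n -> R) (cens : 'I_n -> bool)
  (beta : 'rV[R]_p) (sigma : R) (delta : T) (gamma : R) : \bar R :=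
  (\prod_(j < n | ~~ cens j)
      tp_density H a b 0 sigma delta gamma (y j - lin_pred X j beta))%E.

End Defs.

(* Main.v *)
Require Import Defs.
From HB Require Import structures.
From mathcomp Require Import all_boot all_order all_algebra.
From mathcomp Require Import all_classical all_reals all_analysis.
From mathcomp Require Import measurable_realfun.
From mathcomp Require Import ring lra.
Import Order.TTheory GRing.Theory Num.Theory.
Import numFieldNormedType.Exports.
Local Open Scope classical_set_scope.
Local Open Scope ring_scope.
Section Gen.
Local Open Scope ereal_scope.

Lemma le_int_gen d (T : measurableType d) (R : realType)
  (mu : {measure set T -> \bar R}) (D : set T) (f g : T -> \bar R) :
  (forall x, D x -> 0 <= f x) -> (forall x, D x -> f x <= g x) ->
  \int[mu]_(x in D) f x <= \int[mu]_(x in D) g x.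
Proof.
move=> f0 fg.
have g0 : forall x, D x -> 0 <= g x.
  by move=> x Dx; exact: le_trans (f0 _ Dx) (fg _ Dx).
rewrite (ge0_integralE _ f0) (ge0_integralE _ g0).
apply: le_ereal_sup => _ [h hf <-]; exists h => //= x; apply: le_trans (hf x) _.
rewrite !patchE; case: ifPn => // /set_mem Dx; exact: fg.
Qed.

Lemma le_int_setT d (T : measurableType d) (R : realType)
  (mu : {measure set T -> \bar R}) (D : set T) (f : T -> \bar R) :
  (forall x, 0 <= f x) ->
  \int[mu]_(x in D) f x <= \int[mu]_(x in setT) f x.
Proof.
move=> f0; rewrite integral_mkcond; apply: le_int_gen => x _.
  by rewrite patchE; case: ifP.
by rewrite patchE; case: ifP.
Qed.

Lemma int_Rn_ge0 (R : realType) p (F : 'rV[R]_p -> \bar R) :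
  (forall v, 0 <= F v) -> 0 <= int_Rn F.
Proof.
elim: p F => [|p IH] F F0 //=.
by apply: integral_ge0 => x _; apply: IH.
Qed.

Lemma le_int_Rn (R : realType) p (F G : 'rV[R]_p -> \bar R) :
  (forall v, 0 <= F v) -> (forall v, F v <= G v) -> int_Rn F <= int_Rn G.
Proof.
elim: p F G => [|p IH] F G F0 FG //=.
apply: le_int_gen => x _; first by apply: int_Rn_ge0.
by apply: IH.
Qed.

Lemma prode_le (R : realType) (I : Type) (s : seq I) (F G : I -> \bar R) :
  (forall i, 0 <= F i) -> (forall i, F i <= G i) ->
  \prod_(i <- s) F i <= \prod_(i <- s) G i.
Proof.
move=> F0 FG; elim: s => [|i s IH]; first by rewrite !big_nil.
rewrite !big_cons; apply: lee_pmul => //; exact: prode_ge0.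
Qed.

End Gen.
Section Main.
Local Open Scope ereal_scope.
Variable R : realType.

Lemma tp_ge0 (T : Type) (H : T -> probability R R) (a b : R -> R) sigma delta gamma z :
  (0 < sigma)%R -> (0 < a gamma)%R -> (0 < b gamma)%R ->
  0 <= tp_density H a b 0 sigma delta gamma z.
Proof.
move=> s0 a0 b0; rewrite /tp_density; apply: mule_ge0.
  by rewrite lee_fin divr_ge0// mulr_ge0// ?addr_ge0// ltW.
by case: ifP => _; apply: integral_ge0 => x _;
  rewrite lee_fin mulr_ge0// ?sqrtr_ge0// normal_pdf_ge0.
Qed.

Lemma lik_le (T : Type) (H : T -> probability R R) (a b : R -> R)
  (cens_le1 : forall sigma delta gamma (C : set R) c,
     (0 < sigma)%R -> (0 < a gamma)%R -> (0 < b gamma)%R ->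
     \int[@lebesgue_measure R]_(t in C) tp_density H a b 0 sigma delta gamma (t - c) <= 1)
  n p (X : 'M[R]_(n, p)) y cens C beta sigma delta gamma :
  (0 < sigma)%R -> (0 < a gamma)%R -> (0 < b gamma)%R ->
  0 <= lik_full H a b X y cens C beta sigma delta gamma <=
  lik_obs H a b X y cens beta sigma delta gamma.
Proof.
move=> s0 a0 b0.
have F0 : forall j, 0 <= (if cens j then
        \int[@lebesgue_measure R]_(t in C j) tp_density H a b 0 sigma delta gamma (t - lin_pred X j beta)
      else tp_density H a b 0 sigma delta gamma (y j - lin_pred X j beta)).
  move=> j; case: ifP => _; last exact: tp_ge0.
  by apply: integral_ge0 => t _; exact: tp_ge0.
apply/andP; split; first exact: prode_ge0.
rewrite /lik_full /lik_obs [X in _ <= X]big_mkcond /=; apply: prode_le => // j.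
case: (cens j) => /=; first exact: cens_le1.
by [].
Qed.

End Main.
Section Shift.
Local Open Scope ereal_scope.
Variable R : realType.
Local Notation leb := (@lebesgue_measure R).

Lemma lebesgue_shift (c : R) (A : set R) : measurable A ->
  pushforward leb (fun x : measurableTypeR R => (x + c)%R : measurableTypeR R) A = leb A.
Proof.
move=> mA; apply/esym; apply: lebesgue_measure_unique => //; first exact: measurable_funD.
move=> mf _ [[x y]] _ <-.
rewrite /= /pushforward.
have -> : (+%R^~ c) @^-1` `]x, y]%classic = `](x - c)%R, (y - c)%R]%classic.
  by apply/seteqP; split => z /=; rewrite !in_itv /= lerBrDr ltrBlDr.
rewrite !lebesgue_measure_itv /= !lte_fin ltrBlDr subrK.
by case: ifP => // _; rewrite -!EFinD; congr EFin; rewrite opprB addrA subrK.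
Qed.

Lemma integral_shift (c : R) (h : R -> \bar R) :
  measurable_fun setT h -> (forall x, 0 <= h x) ->
  \int[leb]_x h (x + c)%R = \int[leb]_x h x.
Proof.
move=> mh h0.
have mphi : measurable_fun setT (fun x : measurableTypeR R => (x + c)%R : measurableTypeR R).
  exact: measurable_funD.
have := @ge0_integral_pushforward _ _ _ _ R _ mphi leb setT h measurableT mh (fun x _ => h0 x).
rewrite preimage_setT => <-.
apply: eq_measure_integral => A mA _ /=.
by rewrite lebesgue_shift.
Qed.
End Shift.
Section Half.
Local Open Scope ereal_scope.
Variable R : realType.
Local Notation leb := (@lebesgue_measure R).

Lemma normal_pdf_even (s u : R) : s != 0%R -> normal_pdf 0 s (- u)%R = normal_pdf 0 s u.
Proof. by move=> s0; rewrite /normal_pdf /normal_fun (negbTE s0) !subr0 sqrrN. Qed.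

Lemma half_gauss (s : R) : s != 0%R ->
  \int[leb]_(u in `]-oo, 0%R[) (normal_pdf 0 s u)%:E = (2^-1)%:E /\
  \int[leb]_(u in `[0%R, +oo[) (normal_pdf 0 s u)%:E = (2^-1)%:E.
Proof.
move=> s0.
have mg : measurable_fun setT (fun u => (normal_pdf 0 s u)%:E).
  by apply: measurableT_comp => //; exact: measurable_normal_pdf.
have g0 : forall u, 0 <= (normal_pdf 0 s u)%:E by move=> u; rewrite lee_fin normal_pdf_ge0.
set I := \int[leb]_(u in `[0%R, +oo[) _.
set J := \int[leb]_(u in `]-oo, 0%R[) _.
have hI : I = \int[leb]_(u in `]-oo, 0%R]) (normal_pdf 0 s u)%:E.
  rewrite /I ge0_integration_by_substitution0 //.
  by apply: eq_integral => u _; rewrite normal_pdf_even.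
have hL : \int[leb]_(u in `]-oo, 0%R]) (normal_pdf 0 s u)%:E = J.
  have -> : `]-oo, 0%R]%classic = `]-oo, 0%R[ `|` [set 0%R] :> set R.
    apply/seteqP; split => z /=; rewrite !in_itv /=.
      by rewrite le_eqVlt => /orP[/eqP ->|]; [right|left].
    by case=> [/ltW|->].
  rewrite ge0_integral_setU //=; first last.
  - apply/disj_setPS => z [] /=; rewrite in_itv /= => z0 zE.
    by move: z0; rewrite zE ltxx.
  - exact: measurable_funS mg.
  rewrite [X in _ + X]null_set_integral //=; first by rewrite adde0.
    exact: measurable_funS mg.
  exact: lebesgue_measure_set1.
have hT : J + I = 1.
  rewrite /J /I -ge0_integral_setU //=; first last.
  - apply/disj_setPS => z [] /=; rewrite !in_itv /= andbT => z0 z1.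
    by move: (lt_le_trans z0 z1); rewrite ltxx.
  - exact: measurable_funS mg.
  have -> : `]-oo, 0%R[ `|` `[0%R, +oo[ = [set: R].
    apply/seteqP; split => z //= _; rewrite !in_itv /= andbT.
    by case: (ltP z 0%R) => _; [left|right].
  exact: integral_normal_pdf.
have IJ : I = J by rewrite hI hL.
have J0 : 0 <= J by apply: integral_ge0 => u _; exact: g0.
have Jf : J \is a fin_num.
  rewrite ge0_fin_numE //; apply: (le_lt_trans (y := J + I)).
    by rewrite leeDl // IJ.
  by rewrite hT ltry.
suff hJ : J = (2^-1)%:E by rewrite IJ hJ.
move: hT; rewrite IJ -(fineK Jf) -EFinD => /eqP; rewrite eqe => /eqP h.
congr EFin; move: h; set x := fine J => h.
have -> : x = ((x + x) / 2)%R by field.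
by rewrite h mul1r.
Qed.
End Half.
Section Core.
Local Open Scope ereal_scope.
Variable R : realType.
Local Notation leb := (@lebesgue_measure R).
Local Notation phi := (normal_pdf (0:R) 1).

Definition Gk (K SA SB z tau : R) : R :=
  K * (\1_`[0%R, +oo[ tau * (Num.sqrt tau *
    (\1_`]-oo, 0%R[ z * phi (Num.sqrt tau * (z / SB)) +
     \1_`[0%R, +oo[ z * phi (Num.sqrt tau * (z / SA))))).

Lemma msqrt : measurable_fun setT (@Num.sqrt R).
Proof. exact: continuous_measurable_fun (@sqrt_continuous R). Qed.

Lemma mGk d (T : measurableType d) K SA SB (f1 f2 : T -> R) :
  measurable_fun setT f1 -> measurable_fun setT f2 ->
  measurable_fun setT (fun x => Gk K SA SB (f1 x) (f2 x)).
Proof.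
move=> m1 m2; rewrite /Gk.
apply: measurable_funM => //.
apply: measurable_funM.
  by apply: measurableT_comp; [exact: measurable_indic | exact: m2].
apply: measurable_funM.
  exact: measurableT_comp msqrt m2.
apply: measurable_funD; apply: measurable_funM.
- by apply: measurableT_comp; [exact: measurable_indic | exact: m1].
- apply: measurableT_comp (measurable_normal_pdf _ _) _.
  apply: measurable_funM; first exact: measurableT_comp msqrt m2.
  exact: measurable_funM m1 (measurable_cst _).
- by apply: measurableT_comp; [exact: measurable_indic | exact: m1].
- apply: measurableT_comp (measurable_normal_pdf _ _) _.
  apply: measurable_funM; first exact: measurableT_comp msqrt m2.
  exact: measurable_funM m1 (measurable_cst _).
Qed.

Lemma Gk_ge0 K SA SB z tau : (0 <= K)%R -> (0 <= Gk K SA SB z tau)%R.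
Proof.
move=> K0; rewrite /Gk; apply: mulr_ge0 => //; apply: mulr_ge0 => //.
apply: mulr_ge0; first exact: sqrtr_ge0.
by apply: addr_ge0; apply: mulr_ge0 => //; exact: normal_pdf_ge0.
Qed.

Lemma int_itv_indic d (T : measurableType d) (P : {measure set T -> \bar R}) (A : set T) (g : T -> R) :
  \int[P]_(x in A) (g x)%:E = \int[P]_x (\1_A x * g x)%:E.
Proof.
rewrite integral_mkcond; apply: eq_integral => x _.
rewrite patchE indicE; case: ifP => _; first by rewrite mul1r.
by rewrite mul0r.
Qed.

Lemma tp_as_int (T : Type) (H : T -> probability R R) (a b : R -> R) sigma delta gamma z :
  (0 < sigma)%R -> (0 < a gamma)%R -> (0 < b gamma)%R ->
  tp_density H a b 0 sigma delta gamma z =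
  \int[H delta]_tau (Gk (2 / (sigma * (a gamma + b gamma))) (sigma * a gamma)
      (sigma * b gamma) z tau)%:E.
Proof.
move=> s0 a0 b0.
set K := (2 / (sigma * (a gamma + b gamma)))%R.
have K0 : (0 <= K)%R by rewrite divr_ge0// mulr_ge0// ?addr_ge0// ltW.
rewrite /tp_density /smn_density subr0 -/K.
have mtau : forall u : R, measurable_fun setT (fun tau : R =>
    (\1_`[0%R, +oo[ tau * (Num.sqrt tau * phi (Num.sqrt tau * u)))%:E).
  move=> u; apply/measurable_EFinP; apply: measurable_funM.
    exact: measurable_indic.
  apply: measurable_funM; first exact: msqrt.
  apply: measurableT_comp (measurable_normal_pdf _ _) _.
  exact: measurable_funM msqrt (measurable_cst _).
have E : forall u, K%:E * \int[H delta]_(tau in `[0%R, +oo[) (Num.sqrt tau * phi (Num.sqrt tau * u))%:E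
   = \int[H delta]_tau (K * (\1_`[0%R, +oo[ tau * (Num.sqrt tau * phi (Num.sqrt tau * u))))%:E.
  move=> u; rewrite int_itv_indic -ge0_integralZl // => x _.
  by rewrite lee_fin mulr_ge0// mulr_ge0 ?sqrtr_ge0 ?normal_pdf_ge0.
have iN : forall w : R, (\1_`]-oo, 0%R[ w : R) = (if (w < 0)%R then 1 else 0)%R.
  by move=> w; rewrite indicE mem_setE in_itv /=; case: ifP.
have iP : forall w : R, (\1_`[0%R, +oo[ w : R) = (if (w < 0)%R then 0 else 1)%R.
  by move=> w; rewrite indicE mem_setE in_itv /= andbT leNgt; case: ifP.
case: ltP => hz; rewrite E; apply: eq_integral => tau _; rewrite /Gk (iN z) (iP z).
  by rewrite hz mul1r mul0r addr0.
by rewrite ltNge hz /= mul0r add0r mul1r.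
Qed.

Lemma scale_pdf (S r u : R) : (0 < S)%R -> (0 < r)%R ->
  (r * phi (r * (u / S)) = S * normal_pdf 0 (S / r) u)%R.
Proof.
move=> S0 r0.
have Sr0 : (S / r != 0)%R by rewrite gt_eqF // divr_gt0.
rewrite /normal_pdf (negbTE Sr0) oner_eq0 /normal_fun /normal_peak !subr0.
have k0 : (0 < Num.sqrt (pi *+ 2 : R))%R by rewrite sqrtr_gt0 pmulrn_lgt0 // pi_gt0.
have -> : Num.sqrt ((1 : R) ^+ 2 * pi *+ 2) = Num.sqrt (pi *+ 2) by rewrite expr1n mul1r.
have -> : Num.sqrt ((S / r) ^+ 2 * pi *+ 2) = (S / r * Num.sqrt (pi *+ 2))%R.
  rewrite -mulrnAr sqrtrM ?sqr_ge0 // sqrtr_sqr ger0_norm //.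
  by rewrite ltW // divr_gt0.
have -> : (- (r * (u / S)) ^+ 2 / ((1:R) ^+ 2 *+ 2) = - u ^+ 2 / ((S / r) ^+ 2 *+ 2))%R.
  by field; rewrite ?gt_eqF.
set e := expR _; set k := Num.sqrt _.
by field; rewrite ?gt_eqF.
Qed.

Lemma half_scaled (S r : R) : (0 < S)%R -> (0 < r)%R ->
  \int[leb]_u (\1_`]-oo, 0%R[ u * (r * phi (r * (u / S))))%:E = (S / 2)%:E /\
  \int[leb]_u (\1_`[0%R, +oo[ u * (r * phi (r * (u / S))))%:E = (S / 2)%:E.
Proof.
move=> S0 r0.
have Sr0 : (S / r != 0)%R by rewrite gt_eqF // divr_gt0.
have [h1 h2] := @half_gauss R _ Sr0.
have key : forall A : set R, measurable A ->
    \int[leb]_u (\1_A u * (r * phi (r * (u / S))))%:E =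
    S%:E * \int[leb]_(u in A) (normal_pdf 0 (S / r) u)%:E.
  move=> A mA.
  transitivity (\int[leb]_u (S%:E * (\1_A u * normal_pdf 0 (S / r) u)%:E)).
    apply: eq_integral => u _; rewrite -EFinM scale_pdf //.
    by congr EFin; rewrite mulrCA.
  rewrite ge0_integralZl //.
  - by rewrite [in RHS]int_itv_indic.
  - apply: measurableT_comp => //; apply: measurable_funM; first exact: measurable_indic.
    exact: measurable_normal_pdf.
  - by move=> x _; rewrite lee_fin mulr_ge0 // normal_pdf_ge0.
  - by rewrite lee_fin ltW.
split; rewrite key //.
  by rewrite h1 -EFinM.
by rewrite h2 -EFinM.
Qed.

Lemma Gk_int K SA SB c tau : (0 < K)%R -> (0 < SA)%R -> (0 < SB)%R ->
  \int[leb]_t (Gk K SA SB (t - c) tau)%:E <= (K * (SB / 2 + SA / 2))%:E.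
Proof.
move=> K0 SA0 SB0.
have rhs0 : 0 <= (K * (SB / 2 + SA / 2))%:E.
  by rewrite lee_fin mulr_ge0 ?addr_ge0 ?divr_ge0 // ltW.
have [tau_pos|tau_npos] := ltP 0%R tau; last first.
  rewrite (_ : (fun t => _) = (fun _ => 0)); first by rewrite integral0.
  apply/funext => t; congr EFin; rewrite /Gk.
  move: tau_npos; rewrite le_eqVlt => /orP[/eqP ->|tn].
    by rewrite sqrtr0 !(mul0r, mulr0).
  rewrite indicE mem_setE in_itv /= andbT leNgt tn /=.
  by rewrite !(mul0r, mulr0).
set r := Num.sqrt tau.
have r0 : (0 < r)%R by rewrite sqrtr_gt0.
have mh : measurable_fun setT (fun z : R => (Gk K SA SB z tau)%:E).
  by apply/measurable_EFinP; apply: mGk => //.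
have h0 : forall z, 0 <= (Gk K SA SB z tau)%:E.
  by move=> z; rewrite lee_fin Gk_ge0 // ltW.
rewrite (@integral_shift R (- c)%R _ mh h0).
have [hN _] := @half_scaled SB r SB0 r0.
have [_ hP] := @half_scaled SA r SA0 r0.
have itau : (\1_`[0%R, +oo[ tau : R) = 1%R.
  by rewrite indicE mem_setE in_itv /= andbT ltW.
have E : \int[leb]_z (Gk K SA SB z tau)%:E =
   \int[leb]_z (K%:E * (\1_`]-oo, 0%R[ z * (r * phi (r * (z / SB))))%:E +
                K%:E * (\1_`[0%R, +oo[ z * (r * phi (r * (z / SA))))%:E).
  apply: eq_integral => z _; rewrite -!EFinM -EFinD; congr EFin.
  by rewrite /Gk itau mul1r -/r; ring.
have mB : forall SS, measurable_fun setT (fun z : R => (\1_`]-oo, 0%R[ z * (r * phi (r * (z / SS))))%:E).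
  move=> SS; apply/measurable_EFinP; apply: measurable_funM; first exact: measurable_indic.
  apply: measurable_funM => //; apply: measurableT_comp (measurable_normal_pdf _ _) _.
  by apply: measurable_funM => //; exact: measurable_funM.
have mA : forall SS, measurable_fun setT (fun z : R => (\1_`[0%R, +oo[ z * (r * phi (r * (z / SS))))%:E).
  move=> SS; apply/measurable_EFinP; apply: measurable_funM; first exact: measurable_indic.
  apply: measurable_funM => //; apply: measurableT_comp (measurable_normal_pdf _ _) _.
  by apply: measurable_funM => //; exact: measurable_funM.
have nn : forall (A : set R) SS z, 0 <= (\1_A z * (r * phi (r * (z / SS))))%:E.
  by move=> A SS z; rewrite lee_fin mulr_ge0 // mulr_ge0 ?normal_pdf_ge0 // ltW.
rewrite E ge0_integralD //; last 4 first.
- by move=> z _; rewrite mule_ge0 // lee_fin ltW.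
- exact: measurable_funeM (mB SB).
- by move=> z _; rewrite mule_ge0 // lee_fin ltW.
- exact: measurable_funeM (mA SA).
rewrite !ge0_integralZl //; try (by rewrite lee_fin ltW); try exact: mA; try exact: mB.
by rewrite hN hP -!EFinM -EFinD mulrDr.
Qed.

End Core.
Arguments Gk {R}.
Lemma cens_le1 (R : realType) (T : Type) (H : T -> probability R R) (a b : R -> R)
  sigma delta gamma (C : set R) c :
     (0 < sigma)%R -> (0 < a gamma)%R -> (0 < b gamma)%R ->
     (\int[@lebesgue_measure R]_(t in C) tp_density H a b 0 sigma delta gamma (t - c) <= 1)%E.
Proof.
move=> s0 a0 b0.
set K := (2 / (sigma * (a gamma + b gamma)))%R.
set SA := (sigma * a gamma)%R; set SB := (sigma * b gamma)%R.
have K0 : (0 < K)%R by rewrite divr_gt0 // mulr_gt0 // addr_gt0.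
have SA0 : (0 < SA)%R by rewrite mulr_gt0.
have SB0 : (0 < SB)%R by rewrite mulr_gt0.
have K1 : (K * (SB / 2 + SA / 2) = 1)%R.
  rewrite /K /SA /SB; field.
  by apply/andP; split; rewrite gt_eqF ?addr_gt0.
apply: le_trans; first by apply: le_int_setT => t; exact: tp_ge0.
rewrite (_ : (\int[@lebesgue_measure R]_(t in setT) tp_density H a b 0 sigma delta gamma (t - c))%E =
   (\int[@lebesgue_measure R]_(t in setT) \int[H delta]_tau (Gk K SA SB (t - c) tau)%:E)%E); last first.
  by apply: eq_integral => t _; rewrite tp_as_int.
have mf : measurable_fun setT (fun z : measurableTypeR R * R => (Gk K SA SB (z.1 - c) z.2)%:E).
  apply/measurable_EFinP; apply: mGk; last exact: measurable_snd.
  exact: measurable_funB measurable_fst (measurable_cst _).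
have f0 : forall z : measurableTypeR R * R, (0 <= (Gk K SA SB (z.1 - c) z.2)%:E)%E.
  by move=> z; rewrite lee_fin Gk_ge0 // ltW.
have FT := @fubini_tonelli _ _ _ _ R (@lebesgue_measure R) (H delta) _ mf f0.
simpl in FT; rewrite FT.
apply: le_trans.
  apply: (@le_int_gen _ _ _ _ _ _ (fun _ => 1%E)).
    by move=> tau _; apply: integral_ge0 => t _; exact: f0 (t, tau).
  by move=> tau _; rewrite -K1; exact: Gk_int.
by rewrite integral_cst // mul1e; apply: probability_le1.
Qed.
Theorem theorem4p1 (R : realType)
  (d : measure_display) (Delta : measurableType d) (Pdelta : probability Delta R)
  (H : Delta -> probability R R)
  (H_supp : forall delta, H delta [set` `[0%R, +oo[] = 1%E)
  (H_meas : forall U : set R, measurable U ->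
     measurable_fun [set: Delta] (fun delta => H delta U))
  (Gamma : set R) (mGamma : measurable Gamma) (a b : R -> R)
  (a_pos : forall g, Gamma g -> 0 < a g) (b_pos : forall g, Gamma g -> 0 < b g)
  (Pgamma : probability R R) (Pgamma_supp : Pgamma Gamma = 1%E)
  (q : R) (q_ge0 : 0 <= q)
  (n p : nat) (X : 'M[R]_(n, p)) (X_rank : \rank X = p)
  (y : 'I_n -> R) (cens : 'I_n -> bool) (C : 'I_n -> set R)
  (mC : forall j, cens j -> measurable (C j)) :
  (post_mass Pgamma Gamma Pdelta q (fun beta sigma delta gamma =>
      lik_obs H a b X y cens beta sigma delta gamma) < +oo)%E ->
  (post_mass Pgamma Gamma Pdelta q (fun beta sigma delta gamma =>
      lik_full H a b X y cens C beta sigma delta gamma) < +oo)%E.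
Proof.
apply: le_lt_trans.
have LL := @lik_le R _ H a b (@cens_le1 R _ H a b).
rewrite /post_mass.
have inner : forall gamma delta, Gamma gamma -> forall sigma, `]0%R, +oo[%classic sigma ->
  (0 <= (sigma `^ (- q))%:E * int_Rn (fun beta => lik_full H a b X y cens C beta sigma delta gamma))%E /\
  ((sigma `^ (- q))%:E * int_Rn (fun beta => lik_full H a b X y cens C beta sigma delta gamma) <=
   (sigma `^ (- q))%:E * int_Rn (fun beta => lik_obs H a b X y cens beta sigma delta gamma))%E.
  move=> gamma delta Gg sigma; rewrite /= in_itv /= andbT => s0.
  have h := fun beta => LL n p X y cens C beta sigma delta gamma s0 (a_pos _ Gg) (b_pos _ Gg).
  split.
    apply: mule_ge0; first by rewrite lee_fin powR_ge0.
    by apply: int_Rn_ge0 => v; case/andP: (h v).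
  apply: lee_wpmul2l; first by rewrite lee_fin powR_ge0.
  apply: le_int_Rn => v; case/andP: (h v) => //.
apply: le_int_gen => gamma Gg.
  apply: integral_ge0 => delta _; apply: integral_ge0 => sigma Ss.
  by case: (inner gamma delta Gg sigma Ss).
apply: le_int_gen => delta _.
  apply: integral_ge0 => sigma Ss.
  by case: (inner gamma delta Gg sigma Ss).
apply: le_int_gen => sigma Ss; by case: (inner gamma delta Gg sigma Ss).
Qed.
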